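(* Let $\phi$ be a germ at the origin of a function $\mathbb{R}^3\to\mathbb{R}$ with an isolated critical point at the origin, of corank 2 (the Hessian of $\phi$ at the origin has exactly two zero eigenvalues). Then $\phi$ is not a Beltrami singularity.
   Context: $\phi$ is a Beltrami singularity if there is a germ of a 1-form $\nu$ such that $\eta=d\phi+\nu$ is a singular contact form (a 1-form vanishing exactly at isolated points with $\eta\wedge d\eta\neq0$ elsewhere) and there exists a Riemannian metric $g$ with $\star_g\eta=d\eta$. The corank does not depend on the representative of the equivalence class of the germ (germs $\phi,\psi$ equivalent if $\psi=f\circ\phi\circ h^{-1}$ for germs of diffeomorphisms $f$ of $\mathbb{R}$, $h$ of $\mathbb{R}^3$ fixing the origin). *)

(* Defs.v *)
From Stdlib Require Import Reals.
From Coquelicot Require Derive.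
From mathcomp Require Import all_boot all_algebra.
From mathcomp Require Import Rstruct.

Set Implicit Arguments.
Unset Strict Implicit.
Unset Printing Implicit Defensive.

Import GRing.Theory.
Local Open Scope ring_scope.

Definition pt := 'I_3 -> R.

Definition origin : pt := fun _ => 0.

Definition dist3 (p q : pt) : R :=
  R_sqrt.sqrt (\sum_(i < 3) (p i - q i) ^+ 2).

Definition move (p : pt) (i : 'I_3) (t : R) : pt :=
  fun j => if j == i then p j + t else p j.

Definition pd (i : 'I_3) (f : pt -> R) : pt -> R :=
  fun p => Derive.Derive (fun t : R => f (move p i t)) 0%R.
Definition ex_pd (i : 'I_3) (f : pt -> R) (p : pt) : Prop :=
  Derive.ex_derive (K := Hierarchy.R_AbsRing) (V := Hierarchy.R_NormedModule) (fun t : R => f (move p i t)) 0%R.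

Fixpoint iter_pd (l : seq 'I_3) (f : pt -> R) : pt -> R :=
  match l with
  | [::] => f
  | i :: l' => pd i (iter_pd l' f)
  end.

Definition ball0 (r : R) (p : pt) : Prop := (dist3 p origin < r)%R.

Definition continuous_at3 (f : pt -> R) (p : pt) : Prop :=
  forall eps : R, (0 < eps)%R -> exists delta : R, (0 < delta)%R /\
    forall q, (dist3 q p < delta)%R -> (Rabs (f q - f p) < eps)%R.

Definition smooth_on_ball (r : R) (f : pt -> R) : Prop :=
  forall (l : seq 'I_3) (p : pt), ball0 r p ->
    continuous_at3 (iter_pd l f) p /\ forall i, ex_pd i (iter_pd l f) p.

Definition smooth_germ (f : pt -> R) : Prop :=
  exists r : R, (0 < r)%R /\ smooth_on_ball r f.

(* 1-forms on R^3: eta = sum_i (eta i) dx_i ;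
   2-forms: omega = (1/2) sum_{i,j} (omega i j) dx_i /\ dx_j  (antisymmetric). *)
Definition form1 := 'I_3 -> pt -> R.
Definition form2 := 'I_3 -> 'I_3 -> pt -> R.

Definition exact1 (phi : pt -> R) : form1 := fun i => pd i phi.
Definition add1 (a b : form1) : form1 := fun i p => a i p + b i p.

Definition dform1 (eta : form1) : form2 :=
  fun i j p => pd i (eta j) p - pd j (eta i) p.

Definition i0 : 'I_3 := @Ordinal 3 0 isT.
Definition i1 : 'I_3 := @Ordinal 3 1 isT.
Definition i2 : 'I_3 := @Ordinal 3 2 isT.

(* coefficient of dx_0/\dx_1/\dx_2 in eta /\ omega *)
Definition wedge12 (eta : form1) (om : form2) (p : pt) : R :=
  eta i0 p * om i1 i2 p - eta i1 p * om i0 i2 p + eta i2 p * om i0 i1 p.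

Definition levi (i j k : 'I_3) : R :=
  match nat_of_ord i, nat_of_ord j, nat_of_ord k with
  | 0%N, 1%N, 2%N | 1%N, 2%N, 0%N | 2%N, 0%N, 1%N => 1
  | 0%N, 2%N, 1%N | 2%N, 1%N, 0%N | 1%N, 0%N, 2%N => -1
  | _, _, _ => 0
  end.

Definition metric := pt -> 'M[R]_3.

Definition hodge1 (g : metric) (eta : form1) : form2 :=
  fun j k p => R_sqrt.sqrt (\det (g p)) *
    \sum_(l < 3) \sum_(m < 3) levi l j k * (invmx (g p)) l m * eta m p.

Definition riem_metric_on (r : R) (g : metric) : Prop :=
  (forall i j, smooth_on_ball r (fun p => g p i j)) /\
  (forall p, ball0 r p ->
     (g p)^T = g p /\
     forall v : 'cV[R]_3, v != 0 -> 0 < ((v^T *m g p *m v) 0 0)).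

Definition zero1 (eta : form1) (p : pt) : Prop := forall i, eta i p = 0.

Definition singular_contact_on (r : R) (eta : form1) : Prop :=
  (forall i, smooth_on_ball r (eta i)) /\
  (forall p, ball0 r p -> zero1 eta p ->
     exists delta : R, (0 < delta)%R /\
       forall q, ball0 r q -> (0 < dist3 q p < delta)%R -> ~ zero1 eta q) /\
  (forall p, ball0 r p -> ~ zero1 eta p -> wedge12 eta (dform1 eta) p <> 0).

Definition beltrami_singularity (phi : pt -> R) : Prop :=
  exists (nu : form1) (g : metric) (r : R), (0 < r)%R /\
    (forall i, smooth_on_ball r (nu i)) /\
    (forall i, nu i origin = 0) /\
    (forall i j, pd j (nu i) origin = 0) /\
    riem_metric_on r g /\
    singular_contact_on r (add1 (exact1 phi) nu) /\
    (forall p, ball0 r p -> forall j k,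
        hodge1 g (add1 (exact1 phi) nu) j k p =
        dform1 (add1 (exact1 phi) nu) j k p).

Definition isolated_critical_point0 (phi : pt -> R) : Prop :=
  (forall i, pd i phi origin = 0) /\
  exists r : R, (0 < r)%R /\
    forall p, ball0 r p -> p <> origin -> exists i, pd i phi p <> 0.

Definition hessian0 (phi : pt -> R) : 'M[R]_3 :=
  \matrix_(i, j) pd i (pd j phi) origin.

Definition corank0 (phi : pt -> R) : nat := (3 - \rank (hessian0 phi))%N.

(* Main.v *)
Require Import Defs.
From Stdlib Require Import Reals Lra Psatz FunctionalExtensionality.
From Coquelicot Require Import Coquelicot.
From mathcomp Require Import all_boot all_algebra Rstruct perm.
Import GRing.Theory.
Set Warnings "-notation-overridden -ambiguous-paths".
Open Scope R_scope.
Ltac rconv := rewrite -?R0E -?R1E -?RplusE -?RmultE -?RminusE -?RoppE.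
Ltac rring := rconv; match goal with |- @eq _ ?x ?y => change (@eq R x y) end; ring.

Lemma sum3 (F : 'I_3 -> R) : (\sum_(i < 3) F i)%R = F i0 + F i1 + F i2.
Proof.
rewrite !big_ord_recl big_ord0 /= -!RplusE Rplus_0_r Rplus_assoc.
by do 3 f_equal; apply: val_inj.
Qed.
Lemma sum2 (F : 'I_2 -> R) : (\sum_(i < 2) F i)%R = F ord0 + F ord_max.
Proof.
rewrite !big_ord_recl big_ord0 /= -!RplusE Rplus_0_r.
by do 2 f_equal; apply: val_inj.
Qed.

Lemma det3 (A : 'M[R]_3) : (\det A)%R =
  A i0 i0 * (A i1 i1 * A i2 i2 - A i1 i2 * A i2 i1)
  - A i0 i1 * (A i1 i0 * A i2 i2 - A i1 i2 * A i2 i0)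
  + A i0 i2 * (A i1 i0 * A i2 i1 - A i1 i1 * A i2 i0).
Proof.
rewrite (expand_det_row _ i0) sum3 /cofactor.
rewrite !(expand_det_row _ ord0) !sum2 /cofactor !det_mx11 !mxE /=.
have e1 : forall (x y : 'I_3), val x = val y -> x = y by move=> x y; apply: val_inj.
rewrite (e1 (lift i0 ord0) i1) // (e1 (lift i0 ord_max) i2) // (e1 (lift i0 (lift ord0 _)) i2) //.
rewrite (e1 (lift i0 (lift ord_max _)) i1) // (e1 (lift i1 ord0) i0) // (e1 (lift i1 ord_max) i2) //.
rewrite (e1 (lift i1 (lift ord0 _)) i2) // (e1 (lift i1 (lift ord_max _)) i0) // (e1 (lift i2 ord0) i0) //.
rewrite (e1 (lift i2 ord_max) i1) // (e1 (lift i2 (lift ord0 _)) i1) // (e1 (lift i2 (lift ord_max _)) i0) //.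
rewrite expr0 expr1 expr2 -RoppE.
rconv. ring.
Qed.

Definition mkv (x y z : R) : 'cV[R]_3 := (\col_i nth 0 [:: x; y; z] i)%R.

Lemma mkv_neq0 x y z : (x <> 0 \/ y <> 0 \/ z <> 0) -> (mkv x y z != 0)%R.
Proof.
move=> H; apply/eqP => /matrixP E.
have E0 := E i0 0%R; have E1 := E i1 0%R; have E2 := E i2 0%R.
rewrite !mxE /= in E0 E1 E2.
have F0 : x = 0 := E0. have F1 : y = 0 := E1. have F2 : z = 0 := E2. lra.
Qed.

Lemma qformE n (A : 'M[R]_n) (v : 'cV[R]_n) :
  ((v^T *m A *m v) 0 0)%R = (\sum_j \sum_i v i 0 * A i j * v j 0)%R.
Proof.
rewrite mxE; apply: eq_bigr => j _; rewrite mxE big_distrl; apply: eq_bigr => i _.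
by rewrite !mxE.
Qed.

Lemma qform_mkv (A : 'M[R]_3) x y z : ((mkv x y z)^T *m A *m mkv x y z)%R 0%R 0%R =
  x * A i0 i0 * x + y * A i1 i0 * x + z * A i2 i0 * x +
  (x * A i0 i1 * y + y * A i1 i1 * y + z * A i2 i1 * y) +
  (x * A i0 i2 * z + y * A i1 i2 * z + z * A i2 i2 * z).
Proof. by rewrite qformE !sum3 !mxE /=. Qed.

Lemma det_pos (A : 'M[R]_3) : A^T%R = A ->
  (forall v : 'cV[R]_3, v != 0%R -> (0 < (v^T *m A *m v) 0 0)%R) -> 0 < (\det A)%R.
Proof.
move=> HT HP.
have S i j : A j i = A i j by rewrite -{1}HT mxE.
have P x y z : (x <> 0 \/ y <> 0 \/ z <> 0) -> 0 < 
  x * A i0 i0 * x + y * A i1 i0 * x + z * A i2 i0 * x +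
  (x * A i0 i1 * y + y * A i1 i1 * y + z * A i2 i1 * y) +
  (x * A i0 i2 * z + y * A i1 i2 * z + z * A i2 i2 * z).
  by move=> H; rewrite -qform_mkv; apply/RltP; apply: HP; apply: mkv_neq0.
rewrite det3 !(S i0 i1) !(S i0 i2) !(S i1 i2).
set a := A i0 i0; set b := A i0 i1; set c := A i0 i2; set d := A i1 i1;
  set e := A i1 i2; set f := A i2 i2.
have P1 := P 1 0 0 ltac:(left; lra).
rewrite !(S i0 i1) !(S i0 i2) !(S i1 i2) -/a -/b -/c -/d -/e -/f in P1.
have a0 : 0 < a by nra.
have P2 := P (- b) a 0 ltac:(right; left; lra).
rewrite !(S i0 i1) !(S i0 i2) !(S i1 i2) -/a -/b -/c -/d -/e -/f in P2.
have m0 : 0 < a * d - b * b.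
  nra.
have P3 := P (b * e - c * d) (b * c - a * e) (a * d - b * b) ltac:(right; right; lra).
rewrite !(S i0 i1) !(S i0 i2) !(S i1 i2) -/a -/b -/c -/d -/e -/f in P3.
set D := a * (d * f - e * e) - b * (b * f - e * c) + c * (b * e - d * c).
have : (a * d - b * b) * D > 0 by rewrite /D; nra.
nra.
Qed.

Lemma rank1_fact (H : 'M[R]_3) : \rank H = 1%N ->
  exists (a b : 'I_3 -> R), forall i j, H i j = (a i * b j)%R.
Proof.
move=> Hr.
move: (mulmx_base H); move: (col_base H) (row_base H); rewrite Hr => cb rb E.
exists (fun i => cb i 0%R), (fun j => rb 0%R j) => i j.
by rewrite -E mxE big_ord1.
Qed.

Lemma rank1_diag (H : 'M[R]_3) : \rank H = 1%N -> H^T%R = H ->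
  exists k, H k k <> 0 /\ forall i j, (H i j * H k k = H i k * H j k)%R.
Proof.
move=> Hr HT.
have [a [b Hab]] := rank1_fact _ Hr.
have S i j : H j i = H i j by rewrite -{1}HT mxE.
case: (pickP (fun k => H k k != 0%R)) => [k /eqP Hk | N].
  exists k; split => // i j.
  rewrite (S k j) !Hab; rring.
exfalso.
have H0 : H = 0%R.
  apply/matrixP => i j; rewrite mxE.
  have : (H i j * H i j = 0)%R.
    rewrite {2}(S j i) !Hab.
    have -> : (a i * b j * (a j * b i) = (a i * b i) * (a j * b j))%R by rring.
    by rewrite -!Hab (eqP (negbFE (N i))) mul0r.
  by move/eqP; rewrite mulf_eq0 orbb => /eqP.
by move: Hr; rewrite H0 mxrank0.
Qed.

Lemma key_alg (G H : 'M[R]_3) : G^T%R = G ->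
  (forall v : 'cV[R]_3, v != 0%R -> (0 < (v^T *m G *m v) 0 0)%R) ->
  H^T%R = H -> \rank H = 1%N ->
  (\sum_l \sum_m invmx G l m * H l m)%R <> 0.
Proof.
move=> GT GP HT Hr.
have [k [Hk Hrel]] := rank1_diag _ Hr HT.
pose a : 'cV[R]_3 := (\col_i H i k)%R.
have dp := det_pos _ GT GP.
have Gu : G \in unitmx by rewrite unitmxE unitfE; apply/eqP => E; rewrite E in dp; exact: Rlt_irrefl _ dp.
have GiT : ((invmx G)^T = invmx G)%R by rewrite trmx_inv GT.
pose w := (invmx G *m a)%R.
have wne : w != 0%R.
  apply/eqP => w0.
  have : (G *m w = a)%R by rewrite /w mulKVmx.
  rewrite w0 mulmx0 => /matrixP /(_ k 0%R); rewrite !mxE => E.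
  by apply: Hk; rewrite -E.
have Q := GP w wne.
have QE : (w^T *m G *m w = a^T *m invmx G *m a)%R.
  by rewrite /w trmx_mul GiT -!mulmxA mulKVmx.
rewrite QE qformE in Q.
move/RltP: Q => Q.
move=> S0.
have : (H k k * \sum_l \sum_m invmx G l m * H l m =
        \sum_j \sum_i a i 0 * invmx G i j * a j 0)%R.
  rewrite exchange_big big_distrr /=; apply: eq_bigr => l _.
  rewrite big_distrr /=; apply: eq_bigr => m _.
  rewrite !mxE mulrCA (mulrC (H k k)) Hrel; rring.
rewrite S0 mulr0 => E.
rewrite -E in Q; exact: Rlt_irrefl _ Q.
Qed.

Lemma move_0 p i : move p i 0 = p.
Proof. apply: functional_extensionality => j; rewrite /move; case: (j == i) => //; by rewrite addr0. Qed.

Lemma move_move p i u z : move (move p i u) i z = move p i (u + z).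
Proof. apply: functional_extensionality => j; rewrite /move; case: (j == i) => //=. by rewrite addrA. Qed.

Lemma move_comm p i j u v : i != j -> move (move p i u) j v = move (move p j v) i u.
Proof.
move=> ij; apply: functional_extensionality => k; rewrite /move.
case: (eqVneq k i) => [->|ki]; first by rewrite (negbTE ij).
by [].
Qed.



Lemma dist_le q p d : (forall k, Rabs (q k - p k) <= d) -> dist3 q p <= 2 * d.
Proof.
move=> H.
have H0 := H i0. have H1 := H i1. have H2 := H i2.
have d0 : 0 <= d by apply: Rle_trans (Rabs_pos _) H0.
rewrite /dist3 sum3 !expr2 -!RmultE -!RminusE.
rewrite -[2*d]sqrt_square; last lra.
apply: sqrt_le_1_alt.
move: H0 H1 H2; set a := q i0 - p i0; set b := q i1 - p i1; set c := q i2 - p i2 => H0 H1 H2.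
have sq x : x * x = Rabs x * Rabs x by rewrite -Rabs_mult Rabs_pos_eq; nra.
have := Rabs_pos a; have := Rabs_pos b; have := Rabs_pos c.
rewrite (sq a) (sq b) (sq c); nra.
Qed.

Lemma shift_D (G : R -> R) u : Derive (fun z => G (u + z)) 0 = Derive G u.
Proof.
rewrite /Derive; f_equal; apply: Lim_ext => h.
by rewrite Rplus_0_l Rplus_0_r.
Qed.

Lemma shift_ex (G : R -> R) u : ex_derive (fun z => G (u + z)) 0 -> ex_derive G u.
Proof.
move=> H.
apply: (ex_derive_ext (fun x => (fun z => G (u + z)) (x - u))).
  by move=> x /=; f_equal; ring.
apply: (ex_derive_comp (fun z => G (u + z)) (fun x => x - u)).
  rewrite Rminus_diag; exact: H.
by auto_derive.
Qed.

Lemma pd_line i f p u : pd i f (move p i u) = Derive (fun s => f (move p i s)) u.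
Proof.
rewrite /pd -(shift_D (fun s => f (move p i s)) u); apply: Derive_ext => t /=.
by rewrite move_move.
Qed.

Lemma ex_pd_line i f p u : ex_pd i f (move p i u) -> ex_derive (fun s => f (move p i s)) u.
Proof.
rewrite /ex_pd => H; apply: shift_ex.
by apply: (ex_derive_ext _ _ _ _ H) => t /=; rewrite move_move.
Qed.

Definition Q i j u v := move (move origin i u) j v.

Lemma Q_dist i j u v : dist3 (Q i j u v) origin <= 2 * (Rabs u + Rabs v).
Proof.
apply: dist_le => k; rewrite /Q /move /origin.
have := Rabs_pos u; have := Rabs_pos v; have := Rabs_triang u v.
case: (k == j); case: (k == i); rewrite /= -?RplusE -?RminusE -?R0E; 
  rewrite ?Rplus_0_l ?Rminus_0_r ?Rabs_R0; lra.
Qed.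

Lemma Q_ball r i j u v : Rabs u < r / 4 -> Rabs v < r / 4 -> ball0 r (Q i j u v).
Proof. move=> hu hv; rewrite /ball0; apply/RltP; have := Q_dist i j u v; lra. Qed.

Lemma cont_Q (h : pt -> R) i j : continuous_at3 h origin ->
  continuity_2d_pt (fun u v => h (Q i j u v)) 0 0.
Proof.
move=> H eps.
have [d [/RltP d0 Hd]] := H eps ltac:(apply/RltP; exact: cond_pos eps).
move: d0; rewrite -R0E => d0.
have d4 : 0 < d / 4 by lra.
exists (mkposreal _ d4) => u v /= hu hv.
have -> : Q i j 0 0 = origin by rewrite /Q !move_0.
apply/RltP; apply: Hd; apply/RltP; have := Q_dist i j u v; rewrite !Rminus_0_r in hu hv; lra.
Qed.

Lemma ball_origin r : 0 < r -> ball0 r origin.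
Proof.
move=> r0; rewrite /ball0 /dist3; apply/RltP.
have -> : (\sum_(i < 3) (origin i - origin i) ^+ 2)%R = 0.
  rewrite sum3 /origin !subrr !expr2 !mulr0 -R0E; lra.
by rewrite sqrt_0.
Qed.

Lemma DD1 f i j u v : i != j ->
  Derive (fun z => Derive (fun t => f (Q i j z t)) v) u = pd i (pd j f) (Q i j u v).
Proof.
move=> ij.
rewrite /Q (@move_comm origin i j u v ij) pd_line; apply: Derive_ext => z.
by rewrite -(@move_comm origin i j z v ij) pd_line.
Qed.

Lemma DD2 f i j u v : i != j ->
  Derive (fun z => Derive (fun t => f (Q i j t z)) u) v = pd j (pd i f) (Q i j u v).
Proof.
move=> ij.
rewrite /Q pd_line; apply: Derive_ext => z.
by rewrite (@move_comm origin i j u z ij) pd_line; apply: Derive_ext => t; rewrite move_comm.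
Qed.

Lemma schwarz0 f r i j : 0 < r -> smooth_on_ball r f ->
  pd i (pd j f) origin = pd j (pd i f) origin.
Proof.
move=> r0 Hs.
case: (eqVneq i j) => [-> // | ij].
have r4 : 0 < r / 4 by lra.
pose F u v := f (Q i j u v).
have E1 : pd i (pd j f) origin = Derive (fun z => Derive (fun t => F z t) 0) 0 by [].
have E2 : pd j (pd i f) origin = Derive (fun z => Derive (fun t => F t z) 0) 0.
  rewrite /pd; apply: Derive_ext => z; apply: Derive_ext => t.
  by rewrite /F /Q move_comm // eq_sym.
rewrite E1 E2; apply: Schwarz.
- exists (mkposreal _ r4) => u v /= hu hv.
  rewrite !Rminus_0_r in hu hv.
  have B := Q_ball r i j u v hu hv.
  have Qc : Q i j u v = move (move origin j v) i u by rewrite /Q move_comm.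
  split; [|split; [|split]].
  + apply: (ex_derive_ext (fun z => f (move (move origin j v) i z))).
      by move=> z; rewrite /F /Q move_comm // eq_sym.
    apply: ex_pd_line; rewrite -Qc; exact: ((Hs [::] _ B).2 i).
  + apply: ex_pd_line; exact: ((Hs [::] _ B).2 j).
  + apply: (ex_derive_ext (fun z => pd j f (move (move origin j v) i z))).
      move=> z; rewrite (@move_comm origin j i v z); last by rewrite eq_sym.
      by rewrite pd_line.
    apply: ex_pd_line; rewrite -Qc; exact: ((Hs [:: j] _ B).2 i).
  + apply: (ex_derive_ext (fun z => pd i f (move (move origin i u) j z))).
      move=> z; rewrite (@move_comm origin i j u z ij) pd_line.
      by apply: Derive_ext => t; rewrite move_comm // eq_sym.
    apply: ex_pd_line; exact: ((Hs [:: i] _ B).2 j).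
- have C := cont_Q (pd i (pd j f)) i j ((Hs [:: i; j] _ (ball_origin r r0)).1).
  move=> eps; have [d Hd] := C eps; exists d => u v hu hv.
  by rewrite /F !DD1 //; apply: Hd.
- have C := cont_Q (pd j (pd i f)) i j ((Hs [:: j; i] _ (ball_origin r r0)).1).
  move=> eps; have [d Hd] := C eps; exists d => u v hu hv.
  by rewrite /F !DD2 //; apply: Hd.
Qed.

Definition cont0 (c : R -> R) := forall eps, 0 < eps ->
  exists d, 0 < d /\ forall t, Rabs t < d -> Rabs (c t - c 0) < eps.

Lemma deriv_vanish (c e : R -> R) e' : cont0 c -> is_derive e 0 e' -> e 0 = 0 ->
  is_derive (fun t => c t * e t) 0 (c 0 * e').
Proof.
move=> Hc /is_derive_Reals He e0; apply/is_derive_Reals => eps eps0.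
set K := Rabs (c 0) + 1.
have K0 : 0 < K by have := Rabs_pos (c 0); rewrite /K; lra.
set L := Rabs e' + 1.
have L0 : 0 < L by have := Rabs_pos e'; rewrite /L; lra.
set al := Rmin 1 (eps / (4 * K)).
have al0 : 0 < al by apply: Rmin_pos; [lra | apply: Rdiv_lt_0_compat; lra].
have [d1 Hd1] := He al al0.
set be := Rmin 1 (eps / (4 * L)).
have be0 : 0 < be by apply: Rmin_pos; [lra | apply: Rdiv_lt_0_compat; lra].
have [d2 [d20 Hd2]] := Hc be be0.
have dm : 0 < Rmin d1 d2 by apply: Rmin_pos; [apply: cond_pos | lra].
exists (mkposreal _ dm) => h h0 /= hd.
have hd1 := Rlt_le_trans _ _ _ hd (Rmin_l _ _).
have hd2 := Rlt_le_trans _ _ _ hd (Rmin_r _ _).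
have A := Hd1 h h0 hd1. have B := Hd2 h.
rewrite Rplus_0_l in A B *; have {}B := B hd2.
rewrite e0 Rminus_0_r in A; rewrite e0 Rmult_0_r Rminus_0_r.
set a := e h / h - e' in A.
set b := c h - c 0 in B.
have -> : c h * e h / h - c 0 * e' = c 0 * a + b * a + b * e'.
  rewrite /a /b; field; exact: h0.
have hK : Rabs (c 0) <= K by rewrite /K; lra.
have hL : Rabs e' <= L by rewrite /L; lra.
have al1 : al <= 1 by apply: Rmin_l.
have al2 : al <= eps / (4 * K) by apply: Rmin_r.
have be1 : be <= 1 by apply: Rmin_l.
have be2 : be <= eps / (4 * L) by apply: Rmin_r.
have eK : K = Rabs (c 0) + 1 by [].
clearbody K L al be a b.
have t1 : Rabs (c 0) * Rabs a <= eps / 4.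
  apply: Rle_trans (_ : K * al <= _).
    apply: Rmult_le_compat; try apply: Rabs_pos; lra.
  apply: Rle_trans (_ : K * (eps / (4 * K)) <= _).
    by apply: Rmult_le_compat_l; lra.
  right; field; lra.
have t2 : Rabs b * Rabs a <= eps / 4.
  apply: Rle_trans (_ : 1 * al <= _).
    apply: Rmult_le_compat; try apply: Rabs_pos; lra.
  apply: Rle_trans (_ : 1 * (eps / (4 * K)) <= _); first by lra.
  have K1 : 1 <= K by have := Rabs_pos (c 0); lra.
  rewrite Rmult_1_l /Rdiv; apply: Rmult_le_compat_l; first lra.
  apply: Rinv_le_contravar; lra.
have t3 : Rabs b * Rabs e' <= eps / 4.
  apply: Rle_trans (_ : be * L <= _).
    apply: Rmult_le_compat; try apply: Rabs_pos; lra.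
  apply: Rle_trans (_ : (eps / (4 * L)) * L <= _).
    by apply: Rmult_le_compat_r; lra.
  right; field; lra.
have := Rabs_triang (c 0 * a + b * a) (b * e').
have := Rabs_triang (c 0 * a) (b * a).
rewrite !Rabs_mult; lra.
Qed.

Lemma cont_big (I : Type) (r : seq I) (P : pred I) (F : I -> R -> R) x0 :
  (forall i, P i -> continuity_pt (F i) x0) ->
  continuity_pt (fun t => \sum_(i <- r | P i) F i t)%R x0.
Proof.
move=> H; elim: r => [|x r IH].
  apply: (continuity_pt_ext (fun _ => 0)); first by move=> t; rewrite big_nil.
  exact: continuity_pt_const.
case Px: (P x).
  apply: (continuity_pt_ext (fun t => F x t + \sum_(i <- r | P i) F i t)%R).
    by move=> t; rewrite big_cons Px.
  exact: continuity_pt_plus (H x Px) IH.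
apply: (continuity_pt_ext (fun t => \sum_(i <- r | P i) F i t)%R) => //.
by move=> t; rewrite big_cons Px.
Qed.

Lemma cont_bigprod (I : Type) (r : seq I) (P : pred I) (F : I -> R -> R) x0 :
  (forall i, P i -> continuity_pt (F i) x0) ->
  continuity_pt (fun t => \prod_(i <- r | P i) F i t)%R x0.
Proof.
move=> H; elim: r => [|x r IH].
  apply: (continuity_pt_ext (fun _ => 1)); first by move=> t; rewrite big_nil.
  exact: continuity_pt_const.
case Px: (P x).
  apply: (continuity_pt_ext (fun t => F x t * \prod_(i <- r | P i) F i t)%R).
    by move=> t; rewrite big_cons Px.
  exact: continuity_pt_mult (H x Px) IH.
apply: (continuity_pt_ext (fun t => \prod_(i <- r | P i) F i t)%R) => //.
by move=> t; rewrite big_cons Px.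
Qed.

Lemma cont_det n (M : R -> 'M[R]_n) x0 :
  (forall i j, continuity_pt (fun t => M t i j) x0) ->
  continuity_pt (fun t => \det (M t))%R x0.
Proof.
move=> H.
apply: (continuity_pt_ext (fun t => \sum_(s : 'S_n) (-1) ^+ s * \prod_i M t i (s i))%R).
  by move=> t.
apply: cont_big => s _.
apply: continuity_pt_mult; first exact: continuity_pt_const.
by apply: cont_bigprod => i _.
Qed.

Lemma cont_adj n (M : R -> 'M[R]_n) x0 :
  (forall i j, continuity_pt (fun t => M t i j) x0) ->
  forall i j, continuity_pt (fun t => \adj (M t) i j)%R x0.
Proof.
move=> H i j.
apply: (continuity_pt_ext (fun t => (-1) ^+ (j + i) * \det (row' j (col' i (M t))))%R).
  by move=> t; rewrite mxE.
apply: continuity_pt_mult; first exact: continuity_pt_const.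
apply: cont_det => a b.
apply: (continuity_pt_ext (fun t => M t (lift j a) (lift i b))) => //.
by move=> t; rewrite !mxE.
Qed.

Lemma cont_pos f x : continuity_pt f x -> 0 < f x ->
  exists a, 0 < a /\ forall y, Rdist y x < a -> 0 < f y.
Proof.
move=> C fx.
have [a [a0 Ha]] := C (f x) fx.
exists a; split => // y hy.
case: (Req_dec y x) => [-> // | yx].
have := Ha y (conj (conj I (not_eq_sym yx)) hy).
rewrite /= /Rdist => h.
have := Rle_abs (f x - f y); rewrite Rabs_minus_sym; lra.
Qed.

Lemma cont_c (M : R -> 'M[R]_3) (w : 'I_3 -> R) m :
  (forall i j, continuity_pt (fun t => M t i j) 0) -> 0 < (\det (M 0))%R ->
  continuity_pt (fun t => sqrt (\det (M t)) * \sum_l w l * invmx (M t) l m)%R 0.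
Proof.
move=> H d0.
have Cd := cont_det _ _ _ H.
have [a [a0 Ha]] := cont_pos _ _ Cd d0.
apply: (continuity_pt_locally_ext
  (fun t => sqrt (\det (M t)) * \sum_l w l * ((\det (M t))^-1 * \adj (M t) l m))%R _ a) => //.
  move=> y /Ha dy; f_equal; apply: eq_bigr => l _; f_equal.
  have U : M y \in unitmx.
    by rewrite unitmxE unitfE; apply/eqP => E; rewrite E in dy; exact: Rlt_irrefl _ dy.
  by rewrite /invmx U [in RHS]mxE.
apply: continuity_pt_mult.
  apply: (continuity_pt_comp (fun t => \det (M t))%R sqrt) => //.
  by apply: continuity_pt_sqrt; apply: Rlt_le.
apply: cont_big => l _.
apply: continuity_pt_mult; first exact: continuity_pt_const.
apply: continuity_pt_mult; last exact: (cont_adj _ _ _ H).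
apply: (continuity_pt_inv (fun t => \det (M t))%R) => //.
exact: Rgt_not_eq.
Qed.

Lemma dist_move i t : dist3 (move origin i t) origin <= 2 * Rabs t.
Proof.
apply: dist_le => k; rewrite /move /origin.
case: (k == i); rewrite /= -?RplusE -?RminusE -?R0E ?Rplus_0_l ?Rminus_0_r ?Rabs_R0;
  have := Rabs_pos t; lra.
Qed.

Lemma line_cont h i : continuous_at3 h origin ->
  continuity_pt (fun t => h (move origin i t)) 0.
Proof.
move=> H eps e0.
have [d [/RltP d0 Hd]] := H eps ltac:(apply/RltP; exact: e0).
move: d0; rewrite -R0E => d0.
exists (d / 2); split; first lra.
move=> x [_ hx]; rewrite /= /Rdist in hx *.
rewrite move_0; apply/RltP; apply: Hd; apply/RltP.
have := dist_move i x; rewrite Rminus_0_r in hx; lra.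
Qed.

Lemma cont0_of c : continuity_pt c 0 -> cont0 c.
Proof.
move=> C eps e0.
have [a [a0 Ha]] := C eps e0.
exists a; split => // t ht.
case: (Req_dec t 0) => [-> | t0]; first by rewrite Rminus_diag Rabs_R0.
have H1 : D_x no_cond 0 t /\ Rdist t 0 < a.
  split; [split => //; exact: not_eq_sym t0 | rewrite /Rdist Rminus_0_r; exact ht].
have := Ha t H1.
by rewrite /= /Rdist.
Qed.

Definition cc (g : metric) (j k m : 'I_3) (p : pt) : R :=
  (sqrt (\det (g p)) * \sum_(l < 3) levi l j k * invmx (g p) l m)%R.

Lemma hodge_sum g eta j k p :
  hodge1 g eta j k p = cc g j k i0 p * eta i0 p + cc g j k i1 p * eta i1 p + cc g j k i2 p * eta i2 p.
Proof.
rewrite /hodge1 /cc !sum3; rring.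
Qed.

Lemma hodge_deriv (g : metric) (eta : Defs.form1) i j k :
  (forall a b, continuous_at3 (fun p => g p a b) origin) ->
  0 < (\det (g origin))%R ->
  (forall m, eta m origin = 0) ->
  (forall m, ex_pd i (eta m) origin) ->
  pd i (hodge1 g eta j k) origin =
  cc g j k i0 origin * pd i (eta i0) origin + cc g j k i1 origin * pd i (eta i1) origin
  + cc g j k i2 origin * pd i (eta i2) origin.
Proof.
move=> Gc dpos e0 ex.
have Cm m : cont0 (fun t => cc g j k m (move origin i t)).
  apply: cont0_of; rewrite /cc.
  apply: (cont_c (fun t => g (move origin i t))) => //.
    by move=> a b; apply: (line_cont (fun p => g p a b) i (Gc a b)).
  by rewrite move_0.
have Dm m : is_derive (fun t => cc g j k m (move origin i t) * eta m (move origin i t)) 0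
               (cc g j k m origin * pd i (eta m) origin).
  have h := deriv_vanish _ _ _ (Cm m) (Derive_correct _ _ (ex m)).
  simpl in h. rewrite !move_0 in h.
  apply: h.
  exact: e0.
rewrite /pd.
rewrite (Derive_ext _ (fun t => cc g j k i0 (move origin i t) * eta i0 (move origin i t) +
   cc g j k i1 (move origin i t) * eta i1 (move origin i t) +
   cc g j k i2 (move origin i t) * eta i2 (move origin i t))); last by move=> t; rewrite hodge_sum.
apply: is_derive_unique.
apply: is_derive_plus; first apply: is_derive_plus.
- exact: Dm.
- exact: Dm.
- exact: Dm.
Qed.

Theorem proposition4p16 (phi : pt -> R) :
  smooth_germ phi ->
  isolated_critical_point0 phi ->
  corank0 phi = 2%N ->
  ~ beltrami_singularity phi.
Proof.
move=> [rf [/RltP rf0 Sphi]] [crit _] Hcor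
  [nu [g [r [/RltP r0 [Snu [nu0 [dnu0 [[Gs Gm] [[Seta _] Hod]]]]]]]]].
move: rf0 r0; rewrite -!R0E => rf0 r0.
set eta := add1 (exact1 phi) nu in Seta Hod.
pose H := hessian0 phi.
have Hr : \rank H = 1%N.
  move: Hcor (rank_leq_row H); rewrite /corank0 -/H.
  by case: (\rank H) => [|[|[|[|n]]]].
have HT : (H^T = H)%R.
  by apply/matrixP => a b; rewrite !mxE; exact: (schwarz0 phi rf b a rf0 Sphi).
have [GT GP] := Gm origin (ball_origin r r0).
have dpos := det_pos (g origin) GT GP.
have E0 m : eta m origin = 0.
  rewrite /eta /add1 /exact1 crit nu0; rring.
have EH l m : pd l (eta m) origin = H l m.
  rewrite /eta /add1 /exact1 /H mxE /pd.
  rewrite Derive_plus.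
  - have -> : Derive (fun t => nu m (move origin l t)) 0 = 0 by exact: dnu0.
    rring.
  - exact: ((Sphi [:: m] origin (ball_origin rf rf0)).2 l).
  - exact: ((Snu m [::] origin (ball_origin r r0)).2 l).
have exE i m : ex_pd i (eta m) origin := (Seta m [::] origin (ball_origin r r0)).2 i.
have Gc a b : continuous_at3 (fun p => g p a b) origin :=
  (Gs a b [::] origin (ball_origin r r0)).1.
have HD i j k : pd i (hodge1 g eta j k) origin = pd i (dform1 eta j k) origin.
  rewrite /pd; apply: Derive_ext_loc.
  have r2 : 0 < r / 2 by lra.
  exists (mkposreal _ r2) => t Ht; apply: Hod.
  rewrite /ball0; apply/RltP.
  have := dist_move i t.
  move: Ht; rewrite /ball /= /AbsRing_ball /abs /minus opp_zero plus_zero_r /=.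
  lra.
have DF i j k : pd i (dform1 eta j k) origin =
    pd i (pd j (eta k)) origin - pd i (pd k (eta j)) origin.
  rewrite {1}/pd /dform1 Derive_minus //.
  - exact: ((Seta k [:: j] origin (ball_origin r r0)).2 i).
  - exact: ((Seta j [:: k] origin (ball_origin r r0)).2 i).
have SW a b m : pd a (pd b (eta m)) origin = pd b (pd a (eta m)) origin :=
  schwarz0 (eta m) r a b r0 (Seta m).
have X0 : pd i0 (hodge1 g eta i1 i2) origin + pd i1 (hodge1 g eta i2 i0) origin
          + pd i2 (hodge1 g eta i0 i1) origin = 0.
  rewrite !HD !DF (SW i0 i1) (SW i0 i2) (SW i1 i2); ring.
rewrite !hodge_deriv // !EH in X0.
have K := key_alg _ _ GT GP HT Hr.
rewrite !sum3 in K.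
rewrite /cc !sum3 /levi /= in X0.
have sq : 0 < sqrt (\det (g origin))%R by apply: sqrt_lt_R0.
apply: K.
apply: (Rmult_eq_reg_l (sqrt (\det (g origin))%R)); last lra.
rewrite Rmult_0_r -X0.
set x00 := invmx (g origin) i0 i0.
set x01 := invmx (g origin) i0 i1.
set x02 := invmx (g origin) i0 i2.
set x10 := invmx (g origin) i1 i0.
set x11 := invmx (g origin) i1 i1.
set x12 := invmx (g origin) i1 i2.
set x20 := invmx (g origin) i2 i0.
set x21 := invmx (g origin) i2 i1.
set x22 := invmx (g origin) i2 i2.
rring.
Qed.
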